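(* Let $(X,d_X)$ be a discrete countable metric space, $Y$ a countable set, and $d_1,d_2$ two metrics on $X\sqcup Y$ with $d_1|_X=d_2|_X=d_X$ and $d_1|_Y=d_2|_Y$. Then $d_1$ and $d_2$ are coarsely equivalent if and only if $M_{Y,d_1}=M_{Y,d_2}$ (as subsets of $\mathbb B(H_X,H_Y)$).
   Context: $H_X=\ell^2(X)$, $H_Y=\ell^2(Y)$ with standard bases $\{\delta_x\}$, $\{\delta_y\}$. For a metric $d$ on $X\sqcup Y$ extending $d_X$, a bounded operator $T:H_X\to H_Y$ has propagation at most $L$ if $d(x,y)\ge L$ implies $(\delta_y,T\delta_x)=0$; $M_{Y,d}$ is the norm closure in $\mathbb B(H_X,H_Y)$ of bounded operators $H_X\to H_Y$ of finite propagation. Two metrics $d_1,d_2$ on a set $Z$ are coarsely equivalent if there is a monotonically increasing function $\varphi:[0,\infty)\to[0,\infty)$ with $\lim_{t\to\infty}\varphi(t)=\infty$ such that $d_1(z,z')\le\varphi(d_2(z,z'))$ and $d_2(z,z')\le\varphi(d_1(z,z'))$ for all $z,z'\in Z$. *)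

(* Defs.v *)
From mathcomp Require Import all_boot all_algebra.
From mathcomp Require Import all_classical all_reals all_analysis.
From mathcomp Require Import complex.
Import GRing.Theory Num.Theory.

Set Implicit Arguments.
Unset Strict Implicit.
Unset Printing Implicit Defensive.

Local Open Scope ring_scope.
Local Open Scope complex_scope.

Section Defs.
Variable R : realType.

Definition is_metric (Z : Type) (d : Z -> Z -> R) : Prop :=
  [/\ (forall z, d z z = 0),
      (forall z z', 0 <= d z z'),
      (forall z z', d z z' = 0 -> z = z'),
      (forall z z', d z z' = d z' z) &
      (forall z1 z2 z3, d z1 z3 <= d z1 z2 + d z2 z3)].

Definition discrete_metric (Z : Type) (d : Z -> Z -> R) : Prop :=
  forall z, exists2 eps : R, 0 < eps & forall z', d z z' < eps -> z' = z.

Definition coarsely_equivalent (Z : Type) (d1 d2 : Z -> Z -> R) : Prop :=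
  exists phi : R -> R,
    [/\ (forall t, 0 <= t -> 0 <= phi t),
        (forall s t, 0 <= s -> s <= t -> phi s <= phi t),
        (forall M : R, exists T : R, forall t, T <= t -> M <= phi t),
        (forall z z', d1 z z' <= phi (d2 z z')) &
        (forall z z', d2 z z' <= phi (d1 z z'))].

Definition sqmod (z : R[i]) : R := complex.Re z ^+ 2 + complex.Im z ^+ 2.

Definition l2norm2 (T : countType) (f : T -> R[i]) : \bar R :=
  (\esum_(t in [set: T]) (sqmod (f t))%:E)%E.

Definition is_l2 (T : countType) (f : T -> R[i]) : Prop :=
  (l2norm2 f < +oo)%E.

Definition delta (T : countType) (x : T) : T -> R[i] :=
  fun t => if t == x then 1 else 0.

(** Bounded operators l^2(X) -> l^2(Y).  An operator is represented by a map
    (X -> C) -> (Y -> C); only its restriction to l^2(X) is relevant. *)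
Definition bounded_op (X Y : countType) (T : (X -> R[i]) -> (Y -> R[i])) : Prop :=
  [/\ (forall f, is_l2 f -> is_l2 (T f)),
      (forall (a : R[i]) f g, is_l2 f -> is_l2 g ->
          T (fun x => a * f x + g x) = (fun y => a * T f y + T g y)) &
      (exists c : R, forall f, is_l2 f -> (l2norm2 (T f) <= c%:E * l2norm2 f)%E)].

Definition propagation_le (X Y : countType) (d : X + Y -> X + Y -> R)
    (T : (X -> R[i]) -> (Y -> R[i])) (L : R) : Prop :=
  forall x y, L <= d (inl x) (inr y) -> T (delta x) y = 0.

Definition finite_propagation (X Y : countType) (d : X + Y -> X + Y -> R)
    (T : (X -> R[i]) -> (Y -> R[i])) : Prop :=
  exists L : R, propagation_le d T L.

(* M_{Y,d}: norm closure in B(H_X,H_Y) of finite propagation bounded operators;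
    ||T - S|| <= eps is expressed as ||(T - S) f||^2 <= eps^2 ||f||^2 on l^2. *)
Definition M_Yd (X Y : countType) (d : X + Y -> X + Y -> R)
    (T : (X -> R[i]) -> (Y -> R[i])) : Prop :=
  bounded_op T /\
  forall eps : R, 0 < eps ->
    exists S : (X -> R[i]) -> (Y -> R[i]),
      [/\ bounded_op S, finite_propagation d S &
          forall f, is_l2 f ->
            (l2norm2 (fun y => (T f y - S f y)%R) <= (eps ^+ 2)%:E * l2norm2 f)%E].

End Defs.

(* Main.v *)
Require Import Defs.
From mathcomp Require Import all_boot all_algebra.
From mathcomp Require Import all_classical all_reals all_analysis.
From mathcomp Require Import complex lra.
Import order.Order.TTheory GRing.Theory Num.Theory.
Local Open Scope ring_scope.
Local Open Scope complex_scope.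

Section Aux.
Variable R : realType.

Lemma sqmod_ge0 (z : R[i]) : 0 <= sqmod z.
Proof. by rewrite /sqmod addr_ge0 // sqr_ge0. Qed.

Lemma sqmod0 : sqmod (0 : R[i]) = 0.
Proof. by rewrite /sqmod /= expr0n /= addr0. Qed.

Lemma sqmod1 : sqmod (1 : R[i]) = 1.
Proof. by rewrite /sqmod /= expr1n expr0n /= addr0. Qed.

Lemma l2norm2_ge0 (T : countType) (f : T -> R[i]) : (0 <= l2norm2 f)%E.
Proof. by apply: esum_ge0 => x _; rewrite lee_fin sqmod_ge0. Qed.

Lemma l2norm2_zero (T : countType) : l2norm2 (fun _ : T => (0 : R[i])) = 0%E.
Proof. by apply: esum1 => x _; rewrite sqmod0. Qed.

Lemma l2norm2_delta (T : countType) (x : T) : l2norm2 (delta R x) = 1%E.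
Proof.
rewrite /l2norm2.
transitivity (\esum_(t in [set x]) (sqmod (delta R x t))%:E)%E.
  rewrite [RHS]esum_mkcond; apply: eq_esum => t _.
  rewrite /delta; case: (eqVneq t x) => [->|ne]; first by rewrite mem_set.
  rewrite memNset ?sqmod0 // => tx; by move: ne; rewrite tx eqxx.
etransitivity; first by apply: esum_set1; rewrite lee_fin sqmod_ge0.
by rewrite /delta eqxx sqmod1.
Qed.

Lemma l2norm2_ge_pt (T : countType) (f : T -> R[i]) t :
  ((sqmod (f t))%:E <= l2norm2 f)%E.
Proof.
apply: esum_ge; exists [set t]%classic; first by split => //; exact: finite_set1.
by rewrite fsbig_set1.
Qed.

End Aux.
Lemma fp_transfer (R : realType) (X Y : countType) (d1 d2 : X + Y -> X + Y -> R)
  (phi : R -> R) :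
  (forall s t, 0 <= s -> s <= t -> phi s <= phi t) ->
  (forall z z', d2 z z' <= phi (d1 z z')) ->
  (forall z z', 0 <= d1 z z') ->
  forall T, M_Yd d1 T -> M_Yd d2 T.
Proof.
move=> mono h pos T [bT HT]; split => // eps e0.
have [S [bS [L PL] app]] := HT eps e0; exists S; split => //.
exists (phi (Num.max L 0) + 1) => x y Hle; apply: PL.
rewrite leNgt; apply/negP => lt.
have : d2 (inl x) (inr y) <= phi (Num.max L 0).
  apply: le_trans (h _ _) (mono _ _ (pos _ _) _).
  by rewrite le_max ltW.
lra.
Qed.

Fixpoint cseq {R : realType} (F : R -> R) (a : R) (k : nat) : R :=
  if k is k'.+1 then cseq (R:=R) F a k' + F (cseq (R:=R) F a k') + 1 else a.

Lemma cseq_mono (R : realType) (F : R -> R) a : (forall b, 0 <= F b) ->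
  forall j k, (j < k)%N -> cseq F a j + F (cseq F a j) + 1 <= cseq F a k.
Proof.
move=> F0 j; elim=> // k IH; rewrite ltnS leq_eqVlt => /orP[/eqP->|/IH h] //=.
have := F0 (cseq F a k); lra.
Qed.

Lemma cseq_ge (R : realType) (F : R -> R) a : (forall b, 0 <= F b) ->
  forall k, a + k%:R <= cseq F a k.
Proof.
move=> F0; elim=> [|k IH] /=; first by rewrite addr0.
have := F0 (cseq F a k); rewrite -addn1 natrD; lra.
Qed.

Lemma key (R : realType) (X Y : countType) (d1 d2 : X + Y -> X + Y -> R) :
  is_metric d1 -> is_metric d2 ->
  (forall x x', d1 (inl x) (inl x') = d2 (inl x) (inl x')) ->
  (forall y y', d1 (inr y) (inr y') = d2 (inr y) (inr y')) ->
  (forall T, M_Yd d2 T -> M_Yd d1 T) ->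
  forall n, 0 <= n -> exists B, forall z z', d2 z z' <= n -> d1 z z' <= B.
Proof.
move=> [m10 m1p _ m1s m1t] [m20 m2p _ m2s m2t] hX hY HM n n0.
apply: contrapT => NB.
have bad : forall B, exists p : X * Y,
    d2 (inl p.1) (inr p.2) <= n /\ B < d1 (inl p.1) (inr p.2).
  move=> B; apply: contrapT => nex; apply: NB; exists (Num.max B n) => z z' h2.
  rewrite leNgt; apply/negP; rewrite gt_max => /andP[lB ln].
  case: z z' h2 lB ln => [x|y] [x'|y'] h2 lB ln.
  - by rewrite hX in ln; lra.
  - by apply: nex; exists (x, y').
  - by apply: nex; exists (x', y); rewrite /= m2s m1s.
  - by rewrite hY in ln; lra.
have [g Hg] := choice bad.
pose F b := d1 (inl (g b).1) (inr (g b).2).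
have F0 : forall b, 0 <= F b by move=> b; exact: m1p.
pose c := cseq F (2 * n).
pose xk k := (g (c k)).1.
pose yk k := (g (c k)).2.
have hd2 k : d2 (inl (xk k)) (inr (yk k)) <= n := (Hg (c k)).1.
have hd1 k : c k < d1 (inl (xk k)) (inr (yk k)) := (Hg (c k)).2.
have cge k : 2 * n + k%:R <= c k := @cseq_ge R F _ F0 k.
have cmono j k : (j < k)%N -> c j + d1 (inl (xk j)) (inr (yk j)) + 1 <= c k.
  exact: cseq_mono.
have neq j k : (j < k)%N -> xk j <> xk k /\ yk j <> yk k.
  move=> jk; have h1 := cmono j k jk; have h2 := hd1 k; have h3 := cge j.
  have h4 := hd2 j; have h5 := hd2 k.
  split => e.
  - have t1 := m1t (inl (xk k)) (inr (yk j)) (inr (yk k)).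
    have t2 := m2t (inr (yk j)) (inl (xk j)) (inr (yk k)).
    have s1 := m2s (inr (yk j)) (inl (xk j)); rewrite -e in t1 h2 h5; rewrite hY in t1.
    have : 0 <= j%:R :> R by [].
    lra.
  - have t1 := m1t (inl (xk k)) (inl (xk j)) (inr (yk k)).
    have t2 := m2t (inl (xk k)) (inr (yk k)) (inl (xk j)).
    have s1 := m2s (inr (yk k)) (inl (xk j)); rewrite -e in t1 t2 h2 h5 s1; rewrite hX in t1.
    have : 0 <= j%:R :> R by [].
    lra.
have xinj : injective xk.
  move=> j k e; case: (ltngtP j k) => // jk.
  - by case: (neq _ _ jk) => /(_ e).
  - by case: (neq _ _ jk) => /(_ (esym e)).
have yinj : injective yk.
  move=> j k e; case: (ltngtP j k) => // jk.
  - by case: (neq _ _ jk) => _ /(_ e).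
  - by case: (neq _ _ jk) => _ /(_ (esym e)).
pose kof (y : Y) : option nat :=
  if pselect (exists k, yk k = y) is left P then Some (projT1 (cid P)) else None.
have kofS y k : kof y = Some k -> yk k = y.
  rewrite /kof; case: pselect => [P|] // [<-]; exact: (projT2 (cid P)).
have kofE k : kof (yk k) = Some k.
  rewrite /kof; case: pselect => [P|nP]; last by exfalso; apply: nP; exists k.
  by congr Some; apply: yinj; exact: (projT2 (cid P)).
have kofN y : kof y = None -> ~ range yk y.
  rewrite /kof; case: pselect => // nP _ [k _ e]; apply: nP; by exists k.
pose T (f : X -> R[i]) (y : Y) : R[i] := if kof y is Some k then f (xk k) else 0.
have bound f : (l2norm2 (T f) <= l2norm2 f)%E.
  rewrite /l2norm2.
  have e1 : (\esum_(y in [set: Y]) (sqmod (T f y))%:E =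
             \esum_(y in range yk) (sqmod (T f y))%:E)%E.
    rewrite [RHS]esum_mkcond; apply: eq_esum => y _.
    case ky: (kof y) => [k|].
      by rewrite mem_set //; exists k => //; exact: kofS.
    by rewrite memNset ?[T f y]/T ?ky ?sqmod0 //; exact: kofN.
  rewrite e1 esum_image; last by move=> j k _ _; exact: yinj.
  rewrite (eq_esum (b := fun k => (sqmod (f (xk k)))%:E)); last first.
    by move=> k _; rewrite /T kofE.
  have := esum_image [set: nat] xk (fun x => (sqmod (f x))%:E).
  move=> /= <-; last by move=> j k _ _; exact: xinj.
  rewrite [X in (X <= _)%E]esum_mkcond; apply: le_esum => x _.
  by case: ifP => _ //; rewrite lee_fin sqmod_ge0.
have bT : bounded_op T.
  split.
  - by move=> f; rewrite /is_l2 => h; apply: le_lt_trans h; exact: bound.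
  - move=> a f g' _ _; apply/funext => y; rewrite /T.
    by case: (kof y) => //; rewrite mulr0 addr0.
  - by exists 1 => f _; rewrite mul1e; exact: bound.
have MT : M_Yd d2 T.
  split => // eps e0; exists T; split => //.
    exists (n + 1) => x y h; rewrite /T; case ky: (kof y) => [k|] //.
    have e := kofS _ _ ky; rewrite /delta; case: eqP => // ex; exfalso.
    by have := hd2 k; rewrite ex e; lra.
  move=> f _; rewrite (_ : (fun y => T f y - T f y) = fun _ => 0); last first.
    by apply/funext => y; rewrite subrr.
  rewrite l2norm2_zero; apply: mule_ge0; last exact: l2norm2_ge0.
  by rewrite lee_fin sqr_ge0.
have [_ HT1] := HM T MT.
have [S [bS [L PL] app]] := HT1 (1/2) ltac:(lra).
pose k := (Num.truncn L).+1.
have hL : L <= d1 (inl (xk k)) (inr (yk k)).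
  have hk : L < k%:R := truncnS_gt L; have := cge k; have := hd1 k; lra.
have S0 := PL _ _ hL.
have := app (delta R (xk k)).
rewrite l2norm2_delta mule1 => /(_ ltac:(by rewrite /is_l2 l2norm2_delta ltry)) h.
have := le_trans (@l2norm2_ge_pt R Y _ (yk k)) h.
rewrite /= S0 subr0 /T kofE /delta eqxx sqmod1 lee_fin expr2; lra.
Qed.

Definition phiB {R : realType} (B1 B2 : nat -> R) (t : R) : R :=
  t + \sum_(0 <= i < (Num.truncn t).+2) (`|B1 i| + `|B2 i|).

Lemma phiB_ge {R : realType} (B1 B2 : nat -> R) t : t <= phiB B1 B2 t.
Proof.
by rewrite /phiB lerDl sumr_ge0 // => i _; rewrite addr_ge0.
Qed.

Lemma phiB_mono {R : realType} (B1 B2 : nat -> R) s t :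
  0 <= s -> s <= t -> phiB B1 B2 s <= phiB B1 B2 t.
Proof.
move=> s0 st; rewrite /phiB lerD //.
have le : ((Num.truncn s).+2 <= (Num.truncn t).+2)%N.
  by rewrite ltnS ltnS le_truncn.
rewrite (@big_cat_nat _ _ _ (Num.truncn s).+2 0 _ _ _ (leq0n _) le) /= lerDl sumr_ge0 // => i _; rewrite addr_ge0.
Qed.

Lemma phiB_bound {R : realType} (B1 B2 : nat -> R) t :
  0 <= t -> `|B1 (Num.truncn t).+1| + `|B2 (Num.truncn t).+1| <= phiB B1 B2 t.
Proof.
move=> t0; rewrite /phiB big_nat_recr //= addrA lerDr addr_ge0 //.
by rewrite sumr_ge0 // => i _; rewrite addr_ge0.
Qed.

Theorem mainTheorem4 (R : realType) (X Y : countType)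
    (dX : X -> X -> R) (d1 d2 : X + Y -> X + Y -> R) :
  is_metric dX -> discrete_metric dX ->
  is_metric d1 -> is_metric d2 ->
  (forall x x', d1 (inl x) (inl x') = dX x x') ->
  (forall x x', d2 (inl x) (inl x') = dX x x') ->
  (forall y y', d1 (inr y) (inr y') = d2 (inr y) (inr y')) ->
  coarsely_equivalent d1 d2 <->
  (forall T : (X -> R[i]) -> (Y -> R[i]), M_Yd d1 T <-> M_Yd d2 T).
Proof.
move=> _ _ m1 m2 h1X h2X hY; split.
  move=> [phi [p0 mono unb le12 le21]] T.
  case: m1 => [_ m1p _ _ _]; case: m2 => [_ m2p _ _ _].
  split; [exact: (@fp_transfer _ _ _ d1 d2 phi mono le21 m1p T) | exact: (@fp_transfer _ _ _ d2 d1 phi mono le12 m2p T)].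
move=> HM.
have hX x x' : d1 (inl x) (inl x') = d2 (inl x) (inl x') by rewrite h1X h2X.
have K1 := @key R X Y d1 d2 m1 m2 hX hY (fun T => (HM T).2).
have K2 := @key R X Y d2 d1 m2 m1 (fun x x' => esym (hX x x')) (fun y y' => esym (hY y y'))
  (fun T => (HM T).1).
have [B1 HB1] := choice (fun k : nat => K1 k%:R (ler0n _ _)).
have [B2 HB2] := choice (fun k : nat => K2 k%:R (ler0n _ _)).
case: m1 => [_ m1p _ _ _]; case: m2 => [_ m2p _ _ _].
exists (phiB B1 B2); split.
- by move=> t t0; apply: le_trans (phiB_ge _ _ _).
- exact: phiB_mono.
- by move=> M; exists M => t Mt; apply: le_trans Mt (phiB_ge _ _ _).
- move=> z z'; have t0 := m2p z z'.
  have := @phiB_bound R B1 B2 _ t0.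
  have := HB1 (Num.truncn (d2 z z')).+1 z z' (ltW (truncnS_gt _)).
  have := ler_norm (B1 (Num.truncn (d2 z z')).+1).
  have := normr_ge0 (B2 (Num.truncn (d2 z z')).+1).
  lra.
- move=> z z'; have t0 := m1p z z'.
  have := @phiB_bound R B1 B2 _ t0.
  have := HB2 (Num.truncn (d1 z z')).+1 z z' (ltW (truncnS_gt _)).
  have := ler_norm (B2 (Num.truncn (d1 z z')).+1).
  have := normr_ge0 (B1 (Num.truncn (d1 z z')).+1).
  lra.
Qed.
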